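(* Let $V=\{1,\dots,n\}$ be the node set of a directed graph and, for each realization $z$ (a random simulation of an Independent Cascade process), let $P_v^z\subseteq V$ be the set of nodes reachable from $v$. Define $g_z(\mathbf{x})=\sum_{v\in V}\frac1n\big(1-\prod_{i\in P_v^z}(1-x_i)\big)$ and $f_z(\mathbf{x})=h(g_z(\mathbf{x}))$ with $h(s)=\log(1+s)$, and $f(\mathbf{x})=\mathbb{E}_{z\sim P}[f_z(\mathbf{x})]$. Let $\hat h^L(s)=\sum_{\ell=0}^L\frac{h^{(\ell)}(1/2)}{\ell!}(s-1/2)^\ell$ and $\hat f_z^L(\mathbf{x})=\hat h^L(g_z(\mathbf{x}))$. Let $G_z$ be the multilinear relaxation of $f_z$ and $\widehat{\nabla G_z^L}$ the polynomial estimator built from $\hat f_z^L$. Then for all $\mathbf{y}\in[0,1]^n$, $$\big\|\nabla G_z(\mathbf{y})-\widehat{\nabla G_z^L}(\mathbf{y})\big\|_2\le\frac{\sqrt n}{(L+1)2^L}.$$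
   Context: $G_z(\mathbf{y})=\mathbb{E}_{\mathbf{x}\sim\mathbf{y}}[f_z(\mathbf{x})]$ where $\mathbf{x}\sim\mathbf{y}$ has independent Bernoulli$(y_i)$ coordinates. For a polynomial $p(\mathbf{y})=c_0+\sum_\ell c_\ell\prod_{i\in J_\ell}y_i^{k_i^\ell}$ ($k_i^\ell\ge1$), its multilinearization is $\dot p(\mathbf{y})=c_0+\sum_\ell c_\ell\prod_{i\in J_\ell}y_i$. The polynomial estimator is $\big(\widehat{\nabla G_z^L}(\mathbf{y})\big)_i=\dot{\hat f}{}_z^L([\mathbf{y}]_{+i})-\dot{\hat f}{}_z^L([\mathbf{y}]_{-i})$, where $[\mathbf{y}]_{+i}$, $[\mathbf{y}]_{-i}$ denote $\mathbf{y}$ with coordinate $i$ set to $1$, $0$. *)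

(* Defs.v *)
From HB Require Import structures.
From mathcomp Require Import all_boot all_order all_algebra.
From mathcomp Require Import all_classical all_reals all_analysis.
From mathcomp Require mpoly.
Import (canonicals, coercions, hints) mpoly.

Set Implicit Arguments.
Unset Strict Implicit.
Unset Printing Implicit Defensive.

Import Order.TTheory GRing.Theory Num.Theory.
Local Open Scope ring_scope.

Section Defs.
Variables (R : realType) (n : nat).

(* A realization z of the Independent Cascade process is its live-edge
   directed graph on V = 'I_n (nodes 0..n-1 stand for 1..n). *)
Definition reach (z : rel 'I_n) (v : 'I_n) : {set 'I_n} :=
  [set u | connect z v u].

Definition g_z (z : rel 'I_n) (x : 'I_n -> R) : R :=
  \sum_(v : 'I_n) n%:R^-1 * (1 - \prod_(i in reach z v) (1 - x i)).

Definition h (s : R) : R := ln (1 + s).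

Definition f_z (z : rel 'I_n) (x : 'I_n -> R) : R := h (g_z z x).

(* multilinear relaxation: G_z(y) = E_{x ~ y}[f_z(x)], x_i ~ Bernoulli(y_i)
   independent *)
Definition G_z (z : rel 'I_n) (y : 'rV[R]_n) : R :=
  \sum_(b : {ffun 'I_n -> bool})
     (\prod_(i : 'I_n) (if b i then y ord0 i else 1 - y ord0 i)) *
     f_z z (fun i => (b i)%:R).

Definition gradG (z : rel 'I_n) (y : 'rV[R]_n) : 'rV[R]_n :=
  \row_(i < n) derive (G_z z) y (delta_mx ord0 i).

Definition g_poly (z : rel 'I_n) : mpoly.mpoly n R :=
  \sum_(v : 'I_n) n%:R^-1 *:
     (1 - \prod_(i in reach z v) (1 - mpoly.mpolyX R (mpoly.mnm1 i))).

Definition taylor_coef (l : nat) : R := derive1n l h (2^-1) / (l`!)%:R.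

Definition hhat (L : nat) (s : R) : R :=
  \sum_(l < L.+1) taylor_coef l * (s - 2^-1) ^+ l.

Definition fhat_poly (z : rel 'I_n) (L : nat) : mpoly.mpoly n R :=
  \sum_(l < L.+1) taylor_coef l *: (g_poly z - mpoly.mpolyC n (2^-1)) ^+ l.

Definition multilin (p : mpoly.mpoly n R) : mpoly.mpoly n R :=
  \sum_(m <- mpoly.msupp p)
     mpoly.mcoeff m p *:
       mpoly.mpolyX R
         (mpoly.Multinom [tuple minn (mpoly.fun_of_multinom m i) 1 | i < n]).

Definition set_coord (y : 'rV[R]_n) (i : 'I_n) (b : R) : 'I_n -> R :=
  fun j => if j == i then b else y ord0 j.

Definition gradG_hat (z : rel 'I_n) (L : nat) (y : 'rV[R]_n) : 'rV[R]_n :=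
  \row_(i < n) (mpoly.meval (set_coord y i 1) (multilin (fhat_poly z L)) -
                mpoly.meval (set_coord y i 0) (multilin (fhat_poly z L))).

Definition norm2 (u : 'rV[R]_n) : R := Num.sqrt (\sum_(i < n) u ord0 i ^+ 2).

End Defs.

(* Main.v *)
Require Import Defs.
From HB Require Import structures.
From mathcomp Require Import all_boot all_order all_algebra.
From mathcomp Require Import all_classical all_reals all_analysis.
From mathcomp Require mpoly.
Import (canonicals, coercions, hints) mpoly.
From mathcomp Require Import ring lra.
Import Order.TTheory GRing.Theory Num.Theory.
Local Open Scope ring_scope.
Import numFieldNormedType.Exports.

Lemma dval {R : numFieldType} {V W : normedModType R} {f : V -> W} {a v df} :
  is_derive a v f df -> 'D_v f a = df.
Proof. by move=> H; exact: (@derive_val _ _ _ _ _ _ _ H). Qed.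

Section An.
Variable R : realType.

Lemma h_is_derive (x : R) : -1 < x -> is_derive x 1 (@h R) ((1 + x)^-1).
Proof.
move=> hx.
have hx' : 0 < 1 + x by rewrite -ltrBlDl sub0r.
have -> : (@h R) = (@ln R) \o (fun y => 1 + y) by [].
rewrite -[X in is_derive _ _ _ X]mulr1.
apply: is_derive1_comp; first exact: is_derive1_ln.
have := is_deriveD (is_derive_cst (1:R) x 1) (is_derive_id x 1).
by rewrite add0r.
Qed.


Lemma inv_is_derive (x : R) : -1 < x ->
  is_derive x 1 (fun y : R => (1 + y)^-1) (- ((1 + x)^-1) ^+ 2).
Proof.
move=> hx.
have hx' : 1 + x != 0 by rewrite gt_eqF // -ltrBlDl sub0r.
have d1 := is_deriveD (is_derive_cst (1:R) x 1) (is_derive_id x 1).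
rewrite add0r in d1.
have := is_deriveV hx' d1.
by rewrite scaler1 exprVn.
Qed.

Lemma hder l (x : R) : -1 < x ->
  derive1n l.+1 (@h R) x = (-1) ^+ l * l`!%:R * ((1 + x)^-1) ^+ l.+1.
Proof.
elim: l x => [|l IH] x hx.
  rewrite derive1n1 derive1E (dval (h_is_derive _ hx)).
  by rewrite expr0 mul1r expr1 fact0 mul1r.

have -> : derive1n l.+2 (@h R) = derive1 (derive1n l.+1 (@h R)) by [].
rewrite derive1E.
have hn : \forall y \near x, derive1n l.+1 (@h R) y =
    (fun y => (-1) ^+ l * l`!%:R * ((1 + y)^-1) ^+ l.+1) y.
  have : x \in `]-1, +oo[ by rewrite in_itv /= hx.
  move/near_in_itvoy; apply: filterS => y; rewrite in_itv /= andbT.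
  exact: IH.
rewrite (near_eq_derive (1:R) hn).
have := is_deriveX l.+1 (inv_is_derive _ hx).
move/(is_deriveZ ((-1) ^+ l * l`!%:R)) => D.
rewrite exprfctE in D.
apply: eq_trans (dval D) _.
rewrite /GRing.scale /= factS natrM !exprS expr0; ring.
Qed.


Lemma tc0 : @taylor_coef R 0 = ln (1 + 2^-1).
Proof. by rewrite /taylor_coef fact0 divr1. Qed.

Lemma tcS l : @taylor_coef R l.+1 =
  (-1) ^+ l * ((1 + 2^-1)^-1) ^+ l.+1 / l.+1%:R.
Proof.
rewrite /taylor_coef hder; last by lra.
rewrite factS natrM; field.
by rewrite addrC natr1 !pnatr_eq0 -!lt0n fact_gt0.
Qed.

Lemma hhat_is_derive L (x : R) : is_derive x 1 (@hhat R L)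
  (\sum_(l < L.+1) @taylor_coef R l * (l%:R * (x - 2^-1) ^+ l.-1)).
Proof.
have -> : @hhat R L = \sum_(l < L.+1) (fun s => @taylor_coef R l * (s - 2^-1) ^+ l).
  by rewrite fct_sumE; apply/funext.
apply: is_derive_sum => l.
have D := is_deriveZ (@taylor_coef R l)
  (is_deriveX l (is_deriveB (is_derive_id x 1) (is_derive_cst (2^-1 : R) x 1))).
rewrite exprfctE in D.
have D' : is_derive x 1 (fun s : R => @taylor_coef R l * (s - 2^-1) ^+ l)
  (@taylor_coef R l * (l%:R * (x - 2^-1) ^+ l.-1 * (1 - 0))) := D.
by rewrite subr0 mulr1 in D'.
Qed.


Lemma cmp (F dF : R -> R) (K : R) (L : nat) :
  (forall x : R, - 2^-1 < x < 3 / 2 -> is_derive x 1 F (dF x)) -> F (2^-1) = 0 ->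
  (forall x : R, 2^-1 <= x <= 1 -> dF x <= K * (x - 2^-1) ^+ L) ->
  forall s, 2^-1 <= s <= 1 -> F s <= K / L.+1%:R * (s - 2^-1) ^+ L.+1.
Proof.
move=> HF F0 HdF s /andP[s1 s2].
set c := K / L.+1%:R.
pose psi := fun x : R => c * (x - 2^-1) ^+ L.+1 - F x.
have Dpsi : forall x : R, - 2^-1 < x < 3 / 2 ->
    is_derive x 1 psi (K * (x - 2^-1) ^+ L - dF x).
  move=> x hx.
  have D := is_deriveB (is_deriveZ c (is_deriveX L.+1
     (is_deriveB (is_derive_id x 1) (is_derive_cst (2^-1 : R) x 1)))) (HF x hx).
  rewrite exprfctE in D.
  have D' : is_derive x 1 psi
    (c * (L.+1%:R * (x - 2^-1) ^+ L * (1 - 0)) - dF x) := D.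
  suff -> : K * (x - 2^-1) ^+ L - dF x =
    c * (L.+1%:R * (x - 2^-1) ^+ L * (1 - 0)) - dF x by [].
  rewrite subr0 mulr1 /c; congr (_ - _); field.
  by rewrite addrC natr1 pnatr_eq0.
have key : psi (2^-1) <= psi s.
  apply: (@ger0_derive1_ndecr _ psi (2^-1) 1) => //.
  - move=> x; rewrite in_itv /= => /andP[x1 x2].
    have /Dpsi [] // : - 2^-1 < x < 3 / 2 by apply/andP; split; lra.
  - move=> x; rewrite in_itv /= => /andP[x1 x2].
    have /Dpsi D : - 2^-1 < x < 3 / 2 by apply/andP; split; lra.
    rewrite derive1E (dval D) subr_ge0; apply: HdF; apply/andP; split; lra.
  - apply: continuous_in_subspaceT => x; rewrite inE /= in_itv /= => /andP[x1 x2].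
    have /Dpsi [D _] : - 2^-1 < x < 3 / 2 by apply/andP; split; lra.
    exact/differentiable_continuous/derivable1_diffP.
move: key; rewrite /psi subrr expr0n /= mulr0 F0 subr0 subr_ge0.
done.
Qed.


Lemma cmp_abs (F dF : R -> R) (K : R) (L : nat) :
  (forall x : R, - 2^-1 < x < 3 / 2 -> is_derive x 1 F (dF x)) -> F (2^-1) = 0 ->
  (forall x : R, 2^-1 <= x <= 1 -> `|dF x| <= K * (x - 2^-1) ^+ L) ->
  forall s, 2^-1 <= s <= 1 -> `|F s| <= K / L.+1%:R * (s - 2^-1) ^+ L.+1.
Proof.
move=> HF F0 HdF s hs; rewrite ler_norml; apply/andP; split.
  rewrite lerNl.
  apply: (@cmp (fun x => - F x) (fun x => - dF x)) => //.
  - by move=> x hx; apply: is_deriveN; apply: HF.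
  - by rewrite F0 oppr0.
  - by move=> x hx; apply: le_trans (HdF x hx); rewrite -normrN ler_norm.
apply: (@cmp F dF) => //.
by move=> x hx; apply: le_trans (HdF x hx); rewrite ler_norm.
Qed.

Lemma cmp_full (F dF : R -> R) (K : R) (L : nat) :
  (forall x : R, - 2^-1 < x < 3 / 2 -> is_derive x 1 F (dF x)) -> F (2^-1) = 0 ->
  (forall x : R, 0 <= x <= 1 -> `|dF x| <= K * `|x - 2^-1| ^+ L) ->
  forall s, 0 <= s <= 1 -> `|F s| <= K / L.+1%:R * `|s - 2^-1| ^+ L.+1.
Proof.
move=> HF F0 HdF s /andP[s0 s1].
have [hs|hs] := leP (2^-1) s.
  rewrite [`|s - _|]ger0_norm ?subr_ge0 //.
  apply: cmp_abs => //; last by rewrite hs.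
  move=> x /andP[x1 x2]; rewrite -[x - 2^-1]ger0_norm ?subr_ge0 //.
  by apply: HdF; apply/andP; split; lra.
pose G := F \o (fun x => 1 - x).
have -> : F s = G (1 - s) by rewrite /G /= subKr.
have -> : `|s - 2^-1| = (1 - s) - 2^-1.
  by rewrite ltr0_norm ?subr_lt0 //; lra.
apply: (@cmp_abs G (fun x => dF (1 - x) * (0 - 1)) K L _ _ _ (1 - s)).
- move=> x hx; apply: is_derive1_comp.
    by apply: HF; move: hx => /andP[? ?]; apply/andP; split; lra.
- by rewrite /G /= (_ : 1 - 2^-1 = 2^-1) //; lra.
- move=> x /andP[x1 x2]; rewrite sub0r mulrN1 normrN.
  have -> : x - 2^-1 = `|(1 - x) - 2^-1| by rewrite ler0_norm; lra.
  by apply: HdF; apply/andP; split; lra.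
- by apply/andP; split; lra.
Qed.


Definition dhh L (x : R) :=
  \sum_(l < L.+1) @taylor_coef R l * (l%:R * (x - 2^-1) ^+ l.-1).

Lemma dr_closed L (x : R) : -1 < x ->
  (1 + x)^-1 - dhh L x = (- ((1 + 2^-1)^-1 * (x - 2^-1))) ^+ L / (1 + x).
Proof.
move=> hx.
have hx0 : 1 + x != 0 by rewrite gt_eqF //; lra.
set a := (1 + 2^-1 : R)^-1.
set q := - (a * (x - 2^-1)).
have Hd : dhh L x = a * \sum_(k < L) q ^+ k.
  rewrite /dhh big_ord_recl /= mul0r mulr0 add0r big_distrr /=.
  apply: eq_bigr => k _; rewrite tcS /bump /= add1n /q -/a [X in _ = a * X]exprNn exprMn exprS.
  field; by rewrite addrC natr1 pnatr_eq0.
have H1 : (1 + x) * a = 1 - q.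
  rewrite /q /a; field; lra.
have H2 : 1 - q ^+ L = (1 + x) * a * \sum_(k < L) q ^+ k.
  by rewrite H1 -[LHS]opprB subrX1 -mulNr opprB.
rewrite Hd.
have -> : a * \sum_(k < L) q ^+ k = (1 - q ^+ L) / (1 + x).
  by rewrite H2; field.
by field.
Qed.

Lemma hhat_half L : @hhat R L (2^-1) = ln (1 + 2^-1).
Proof.
rewrite /hhat big_ord_recl /= subrr expr0 mulr1 tc0 big1 ?addr0 // => i _.
by rewrite expr0n /= mulr0.
Qed.

Lemma r_bound L (s : R) : 0 <= s <= 1 ->
  `|h s - hhat L s| <= ((L.+1)%:R * 2 ^+ L.+1)^-1.
Proof.
move=> hs.
set a := (1 + 2^-1 : R)^-1.
have a0 : 0 <= a by rewrite /a; apply: ltW; rewrite invr_gt0; lra.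
have a1 : a <= 1 by rewrite /a invf_le1; lra.
have H' : `|h s - hhat L s| <= a ^+ L / L.+1%:R * `|s - 2^-1| ^+ L.+1.
  apply: (@cmp_full (fun s => h s - hhat L s) (fun x => (1 + x)^-1 - dhh L x)
   (a ^+ L) L) => //.
- move=> x hx.
  have hx1 : -1 < x by move: hx => /andP[? ?]; lra.
  have D := is_deriveB (h_is_derive _ hx1) (hhat_is_derive L x).
  have D' : is_derive x 1 (fun s => h s - hhat L s)
     ((1 + x)^-1 - dhh L x) := D.
  exact: D'.
- by rewrite /h hhat_half subrr.
- move=> x /andP[x0 x1].
  rewrite dr_closed; last by lra.
  rewrite normrM normrX normrN normrM (ger0_norm a0) exprMn.
  rewrite normfV [`|1 + x|]ger0_norm; last by lra.
  rewrite -[X in _ <= X]mulr1 ler_wpM2l //.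
    by rewrite mulr_ge0 // exprn_ge0.
  by rewrite invf_le1; lra.
apply: le_trans H' _.
rewrite invfM -exprVn; apply: ler_pM.
- by rewrite mulr_ge0 // ?exprn_ge0 // invr_ge0 ler0n.
- by rewrite exprn_ge0.
- rewrite -[X in _ <= X]mul1r ler_wpM2r // ?invr_ge0 ?ler0n //.
  exact: exprn_ile1.
- apply: lerXn2r; rewrite ?inE ?nnegrE //; try lra.
  by rewrite ler_norml; lra.
Qed.

End An.

Section Comb.
Variables (R : realType) (n : nat).

Definition wt (y : 'I_n -> R) (b : {ffun 'I_n -> bool}) : R :=
  \prod_i (if b i then y i else 1 - y i).
Definition Ex (y : 'I_n -> R) (F : {ffun 'I_n -> bool} -> R) : R :=
  \sum_b wt y b * F b.
Definition bv (b : {ffun 'I_n -> bool}) : 'I_n -> R := fun i => (b i)%:R.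

Lemma Ex_mono (y : 'I_n -> R) (m : mpoly.multinom n) :
  Ex y (fun b => \prod_i bv b i ^+ m i) = \prod_i y i ^+ minn (m i) 1.
Proof.
rewrite /Ex /wt.
pose F := fun (i : 'I_n) (c : bool) => (if c then y i else 1 - y i) * (c%:R : R) ^+ m i.
transitivity (\sum_(b : {ffun 'I_n -> bool}) \prod_i F i (b i)).
  by apply: eq_bigr => b _; rewrite -big_split.
rewrite -bigA_distr_bigA /F.
apply: eq_bigr => i _; rewrite big_bool /= expr1n mulr1 expr0n.
by case: (m i) => [|k] /=; rewrite ?mulr1 ?mulr0 ?addr0 ?expr0 ?expr1 // subrKC.
Qed.

Lemma multilinE (y : 'I_n -> R) (p : mpoly.mpoly n R) :
  mpoly.meval y (multilin p) = Ex y (fun b => mpoly.meval (bv b) p).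
Proof.
rewrite /multilin raddf_sum /=.
have -> : Ex y (fun b => mpoly.meval (bv b) p) =
   \sum_(m <- mpoly.msupp p) mpoly.mcoeff m p *
      Ex y (fun b => \prod_i bv b i ^+ m i).
  rewrite /Ex.
  under eq_bigr => b _ do rewrite mpoly.mevalE big_distrr /=.
  rewrite exchange_big /=; apply: eq_bigr => m _.
  rewrite big_distrr /=; apply: eq_bigr => b _; ring.
apply: eq_bigr => m _; rewrite mpoly.mevalZ mpoly.mevalX Ex_mono.
by congr (_ * _); apply: eq_bigr => i _; rewrite mpoly.mnmE.
Qed.


Lemma meval_g (z : rel 'I_n) (x : 'I_n -> R) :
  mpoly.meval x (@g_poly R n z) = g_z z x.
Proof.
rewrite /g_poly /g_z raddf_sum /=; apply: eq_bigr => v _.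
rewrite mpoly.mevalZ rmorphB rmorph1 rmorph_prod /=; congr (_ * (_ - _)).
apply: eq_bigr => i _; rewrite rmorphB rmorph1; congr (_ - _); exact: mpoly.mevalXU.
Qed.

Lemma meval_fhat (z : rel 'I_n) L (x : 'I_n -> R) :
  mpoly.meval x (@fhat_poly R n z L) = hhat L (g_z z x).
Proof.
rewrite /fhat_poly /hhat raddf_sum /=; apply: eq_bigr => l _.
by rewrite mpoly.mevalZ rmorphXn rmorphB /= mpoly.mevalC meval_g.
Qed.


Definition setc (y : 'I_n -> R) (i : 'I_n) (c : R) : 'I_n -> R :=
  fun j => if j == i then c else y j.

Lemma Ex_split (y : 'I_n -> R) i F :
  Ex y F = y i * Ex (setc y i 1) F + (1 - y i) * Ex (setc y i 0) F.
Proof.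
rewrite /Ex !big_distrr -big_split /=; apply: eq_bigr => b _.
rewrite /wt (bigD1 i) //= (bigD1 i (P := predT)) //= (bigD1 i (P := predT)) //=.
rewrite /setc eqxx.
have E : forall c, \prod_(j < n | j != i)
   (if b j then (if j == i then c else y j) else 1 - (if j == i then c else y j))
   = \prod_(j < n | j != i) (if b j then y j else 1 - y j).
  by move=> c; apply: eq_bigr => j /negbTE ->.
rewrite !E; case: (b i); ring.
Qed.

Lemma Ex_sum1 (y : 'I_n -> R) : \sum_b wt y b = 1.
Proof.
rewrite /wt.
pose F := fun (i : 'I_n) (c : bool) => if c then y i else 1 - y i.
transitivity (\sum_(b : {ffun 'I_n -> bool}) \prod_i F i (b i)) => //.
rewrite -bigA_distr_bigA /F; apply: big1 => i _.
by rewrite big_bool /= subrKC.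
Qed.

Lemma wt_ge0 (y : 'I_n -> R) b : (forall i, 0 <= y i <= 1) -> 0 <= wt y b.
Proof.
move=> hy; apply: prodr_ge0 => i _; have /andP[h0 h1] := hy i.
by case: (b i) => //; rewrite subr_ge0.
Qed.

Lemma Ex_bound (y : 'I_n -> R) F M : (forall i, 0 <= y i <= 1) ->
  (forall b, `|F b| <= M) -> `|Ex y F| <= M.
Proof.
move=> hy hF; rewrite /Ex.
apply: le_trans (ler_norm_sum _ _ _) _.
apply: le_trans (_ : \sum_b wt y b * M <= M).
  apply: ler_sum => b _; rewrite normrM ger0_norm ?wt_ge0 //.
  by apply: ler_wpM2l; [exact: wt_ge0 | exact: hF].
by rewrite -big_distrl /= Ex_sum1 mul1r.
Qed.

Lemma Ex_lin (y : 'I_n -> R) F1 F2 :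
  Ex y F1 - Ex y F2 = Ex y (fun b => F1 b - F2 b).
Proof.
by rewrite /Ex -sumrB; apply: eq_bigr => b _; rewrite mulrBr.
Qed.


Lemma gradG_entry (z : rel 'I_n) (Y : 'rV[R]_n) (i : 'I_n) :
  derive (G_z z) Y (delta_mx ord0 i) =
  Ex (set_coord Y i 1) (fun b => f_z z (bv b)) -
  Ex (set_coord Y i 0) (fun b => f_z z (bv b)).
Proof.
set A := Ex (set_coord Y i 1) _.
set B := Ex (set_coord Y i 0) _.
have GE : forall Y' : 'rV[R]_n, G_z z Y' =
    Ex (fun j => Y' ord0 j) (fun b => f_z z (bv b)) by [].
have key : forall t : R, G_z z (t *: delta_mx ord0 i + Y) - G_z z Y = t * (A - B).
  move=> t; rewrite !GE (Ex_split _ i) [Ex (fun j => Y ord0 j) _](Ex_split _ i).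
  have S : forall c, setc (fun j => (t *: delta_mx ord0 i + Y) ord0 j) i c =
                     set_coord Y i c.
    move=> c; apply/funext => j; rewrite /setc /set_coord.
    by case: (j =P i) => // /eqP ji; rewrite !mxE eqxx /= (negbTE ji) mulr0 add0r.
  have S' : forall c, setc (fun j => Y ord0 j) i c = set_coord Y i c by [].
  rewrite !S !S' -/A -/B !mxE !eqxx /= mulr1; ring.
rewrite /derive; apply: (lim_near_cst (@Rhausdorff R)).
near=> t.
have t0 : t != 0 by near: t; exact: nbhs_dnbhs_neq.
rewrite /= key /GRing.scale /= mulrA mulVf // mul1r.
Unshelve. all: by end_near.
Qed.

End Comb.
Arguments wt {R n}.
Arguments Ex {R n}.
Arguments bv {R n}.
Arguments setc {R n}.
Arguments Ex_mono {R n}.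
Arguments multilinE {R n}.
Arguments meval_g {R n}.
Arguments meval_fhat {R n}.
Arguments Ex_split {R n}.
Arguments Ex_sum1 {R n}.
Arguments wt_ge0 {R n}.
Arguments Ex_bound {R n}.
Arguments Ex_lin {R n}.
Arguments gradG_entry {R n}.


Section Main.
Variables (R : realType) (n : nat).

Lemma g_range (z : rel 'I_n) (b : {ffun 'I_n -> bool}) :
  0 <= g_z z (bv b : 'I_n -> R) <= 1.
Proof.
have P01 : forall v, 0 <= \prod_(i in reach z v) (1 - (bv b i : R)) <= 1.
  move=> v; apply/andP; split.
    by apply: prodr_ge0 => i _; rewrite /bv; case: (b i); rewrite ?subrr ?subr0.
  by apply: prodr_ile1 => i _; rewrite /bv; case: (b i); rewrite ?subrr ?subr0 ?lexx ?ler01.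
have T01 : forall v, 0 <= (n%:R : R)^-1 * (1 - \prod_(i in reach z v) (1 - bv b i))
                       <= (n%:R : R)^-1.
  move=> v; have /andP[p0 p1] := P01 v.
  apply/andP; split.
    by rewrite mulr_ge0 // ?invr_ge0 ?ler0n // subr_ge0.
  rewrite -[X in _ <= X]mulr1 ler_wpM2l ?invr_ge0 ?ler0n //.
  by rewrite lerBlDr lerDl.
apply/andP; split.
  by apply: sumr_ge0 => v _; have /andP[] := T01 v.
apply: le_trans (_ : \sum_(v : 'I_n) n%:R^-1 <= 1).
  by apply: ler_sum => v _; have /andP[] := T01 v.
rewrite sumr_const card_ord.
case: n => [|k]; first by rewrite mulr0n ler01.
by rewrite -[_^-1 *+ _]mulr_natr mulVf ?pnatr_eq0.
Qed.

Lemma ltrW01 (u : unit) : 0 <= (1 : R) <= 1.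
Proof. by rewrite (@ler01 R) lexx. Qed.
Lemma ltrW00 (u : unit) : 0 <= (0 : R) <= 1.
Proof. by rewrite lexx (@ler01 R). Qed.

Lemma entry_bound (z : rel 'I_n) (L : nat) (y : 'rV[R]_n) (i : 'I_n) :
  (forall i : 'I_n, 0 <= y ord0 i <= 1) ->
  `|(gradG z y - gradG_hat z L y) ord0 i| <= ((L.+1)%:R * 2 ^+ L)^-1.
Proof.
move=> hy.
rewrite !mxE gradG_entry !multilinE.
set D := fun b => f_z z (bv b) - mpoly.meval (bv b) (fhat_poly R z L).
have E : forall c, Ex (set_coord y i c) (fun b => f_z z (bv b)) -
   Ex (set_coord y i c) (fun b => mpoly.meval (bv b) (fhat_poly R z L)) =
   Ex (set_coord y i c) D by move=> c; rewrite Ex_lin.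
have -> : Ex (set_coord y i 1) (fun b => f_z z (bv b)) -
    Ex (set_coord y i 0) (fun b => f_z z (bv b)) -
    (Ex (set_coord y i 1) (fun b => mpoly.meval (bv b) (fhat_poly R z L)) -
     Ex (set_coord y i 0) (fun b => mpoly.meval (bv b) (fhat_poly R z L))) =
    Ex (set_coord y i 1) D - Ex (set_coord y i 0) D.
  by rewrite -!E; ring.
have hD : forall b, `|D b| <= ((L.+1)%:R * 2 ^+ L.+1)^-1.
  move=> b; rewrite /D meval_fhat /f_z; exact: (@r_bound R L _ (g_range z b)).
have hc : forall c : R, 0 <= c <= 1 -> forall j, 0 <= set_coord y i c j <= 1.
  by move=> c hc j; rewrite /set_coord; case: (j == i).
apply: le_trans (ler_normB _ _) _.
have B1 := Ex_bound (set_coord y i 1) D _ (hc 1 (ltrW01 tt)) hD.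
have B0 := Ex_bound (set_coord y i 0) D _ (hc 0 (ltrW00 tt)) hD.
apply: le_trans (lerD B1 B0) _.
rewrite exprS -[X in _ <= X]mul1r.
have -> : ((L.+1)%:R * (2 * 2 ^+ L))^-1 = 2^-1 * ((L.+1)%:R * 2 ^+ L : R)^-1.
  by rewrite mulrCA invfM.
by rewrite -mulrDl -mulr2n -[_ *+ 2]mulr_natl mulfV ?pnatr_eq0.
Qed.

End Main.

Theorem theorem4 (R : realType) (n : nat) (z : rel 'I_n) (L : nat)
    (y : 'rV[R]_n) :
  (forall i : 'I_n, 0 <= y ord0 i <= 1) ->
  norm2 (gradG z y - gradG_hat z L y)
    <= Num.sqrt (n%:R : R) / ((L.+1)%:R * 2 ^+ L).
Proof.
move=> hy.
set c := ((L.+1)%:R * 2 ^+ L : R)^-1.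
have c0 : 0 <= c by rewrite /c invr_ge0 mulr_ge0 ?ler0n // exprn_ge0.
rewrite /norm2.
apply: le_trans (_ : Num.sqrt (n%:R * c ^+ 2) <= _).
  rewrite ler_sqrt ?mulr_ge0 ?ler0n ?exprn_ge0 //.
  apply: le_trans (_ : \sum_(i < n) c ^+ 2 <= _).
    apply: ler_sum => i _.
    rewrite -real_normK ?num_real // ler_sqr ?nnegrE ?normr_ge0 //.
    exact: entry_bound.
  by rewrite sumr_const card_ord mulr_natl.
by rewrite sqrtrM ?ler0n // sqrtr_sqr ger0_norm.
Qed.
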